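(* For every integer $n\ge 1$, the element $$g_n=s^nas^{-n}\,t^nat^{-2n}at^n\in G$$ satisfies $d_{\mathcal A}(1,g_n)\ge 6n$. Equivalently, if $g\in G$ has normal form $g=c_{(-n,0)}c_{(0,n)}c_{(0,-n)}$ (i.e. lamplighter position $(0,0)$ and lit lamps exactly $\{(0,n),(0,-n),(-n,0)\}$), then $d_{\mathcal A}(1,g)\ge 6n$.
   Context: $G=\langle a,s,t \mid a^2=1,\ [a,a^t]=1,\ [s,t]=1,\ a^s=aa^t\rangle$, where $[x,y]=x^{-1}y^{-1}xy$ and $x^y=y^{-1}xy$. $\mathcal A=\{a,s,t,at,ta,ata,as,sa,asa\}$ and $d_{\mathcal A}$ is the word metric on $G$ with respect to $\mathcal A$. For $j\in\mathbb Z$ let $c_{(0,j)}=t^{-j}at^{j}$ and for $i<0$ let $c_{(i,0)}=s^{-i}as^{i}$; one has $g_n=c_{(-n,0)}c_{(0,-n)}c_{(0,n)}$, and these three elements commute. *)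

(* Defs.v *)
From Stdlib Require Import List Arith.
Import ListNotations.

Inductive gen : Type := ga | gs | gt.

(* a letter (x, false) is x, (x, true) is x^{-1} *)
Definition word := list (gen * bool).

Definition winv (w : word) : word :=
  rev (map (fun p => (fst p, negb (snd p))) w).

Definition wa : word := [(ga, false)].
Definition wai : word := [(ga, true)].
Definition ws : word := [(gs, false)].
Definition wsi : word := [(gs, true)].
Definition wt : word := [(gt, false)].
Definition wti : word := [(gt, true)].

Definition comm (x y : word) : word := winv x ++ winv y ++ x ++ y.
Definition conj (x y : word) : word := winv y ++ x ++ y.

Definition relators : list word :=
  [ wa ++ wa ;
    comm wa (conj wa wt) ;
    comm ws wt ;
    conj wa ws ++ winv (wa ++ conj wa wt) ].

Inductive weq : word -> word -> Prop :=
| weq_refl : forall u, weq u u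
| weq_sym : forall u v, weq u v -> weq v u
| weq_trans : forall u v w, weq u v -> weq v w -> weq u w
| weq_ctx : forall p q u v, weq u v -> weq (p ++ u ++ q) (p ++ v ++ q)
| weq_free : forall x b, weq [(x, b); (x, negb b)] []
| weq_rel : forall r, In r relators -> weq r [].

Inductive Agen : Type :=
  Aa | As | At | Aat | Ata | Aata | Aas | Asa | Aasa.

Definition Aval (y : Agen) : word :=
  match y with
  | Aa => wa | As => ws | At => wt
  | Aat => wa ++ wt | Ata => wt ++ wa | Aata => wa ++ wt ++ wa
  | Aas => wa ++ ws | Asa => ws ++ wa | Aasa => wa ++ ws ++ wa
  end.

Definition Aword := list (Agen * bool).

Definition Aeval (L : Aword) : word :=
  concat (map (fun p : Agen * bool => if snd p then winv (Aval (fst p)) else Aval (fst p)) L).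

Definition dA_one_ge (g : word) (k : nat) : Prop :=
  forall L : Aword, weq (Aeval L) g -> k <= length L.

Definition pw (w : word) (n : nat) : word := concat (repeat w n).

Definition g_ (n : nat) : word :=
  pw ws n ++ wa ++ pw wsi n ++ pw wt n ++ wa ++ pw wti (2 * n) ++ wa ++ pw wt n.

(* Main.v *)
Require Import Defs.
From Stdlib Require Import List Arith ZArith Lia Bool.
Import ListNotations.
Open Scope Z_scope.

Definition padd (p q : Z*Z) : Z*Z := (fst p + fst q, snd p + snd q).
Definition step (l : gen*bool) : Z*Z :=
  match l with
  | (ga,_) => (0,0) | (gs,false) => (1,0) | (gs,true) => (-1,0)
  | (gt,false) => (0,1) | (gt,true) => (0,-1) end.
Fixpoint pos (w : word) : Z*Z :=
  match w with [] => (0,0) | l::w => padd (step l) (pos w) end.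
Fixpoint lam (f : Z*Z -> bool) (p : Z*Z) (w : word) : bool :=
  match w with
  | [] => false
  | l::w => match fst l with
            | ga => xorb (f p) (lam f p w)
            | _ => lam f (padd p (step l)) w end end.

Definition FF (f : Z*Z -> bool) := forall i j, f (i-1, j) = xorb (f (i, j-1)) (f (i,j)).

Lemma padd_0l q : padd (0,0) q = q. Proof. destruct q; reflexivity. Qed.
Lemma padd_0r q : padd q (0,0) = q. Proof. destruct q; unfold padd; simpl; f_equal; lia. Qed.
Lemma padd_assoc p q r : padd (padd p q) r = padd p (padd q r).
Proof. unfold padd; simpl; f_equal; lia. Qed.

Lemma pos_app u v : pos (u ++ v) = padd (pos u) (pos v).
Proof. induction u as [|l u IH]; simpl. now rewrite padd_0l. now rewrite IH, padd_assoc. Qed.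

Lemma lam_app f u v : forall p, lam f p (u ++ v) = xorb (lam f p u) (lam f (padd p (pos u)) v).
Proof.
  induction u as [|[x b] u IH]; intro p; simpl.
  - now rewrite padd_0r.
  - destruct x; simpl; rewrite IH.
    + destruct b; simpl; rewrite padd_0l; now rewrite xorb_assoc.
    + now rewrite padd_assoc.
    + now rewrite padd_assoc.
Qed.

Lemma fpt (f : Z*Z -> bool) a b c d : a = c -> b = d -> f (a,b) = f (c,d).
Proof. intros; subst; reflexivity. Qed.

Ltac fixpt f i j := repeat match goal with |- context [f (?a, ?b)] =>
  progress (first [ rewrite (fpt f a b i j) by lia
                  | rewrite (fpt f a b (i-1) j) by lia
                  | rewrite (fpt f a b i (j-1)) by lia ]) end.

Lemma weq_inv u v : weq u v -> pos u = pos v /\ forall f, FF f -> forall p, lam f p u = lam f p v.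
Proof.
  induction 1.
  - auto.
  - destruct IHweq as [H1 H2]; split; auto. intros; symmetry; auto.
  - destruct IHweq1 as [H1 H2], IHweq2 as [H3 H4]; split; [congruence|].
    intros; rewrite H2, H4; auto.
  - destruct IHweq as [H1 H2]; split.
    + rewrite (pos_app p (u++q)), (pos_app p (v++q)), (pos_app u q), (pos_app v q), H1; auto.
    + intros f Hf p0. rewrite !lam_app, H1, H2; auto.
  - split.
    + destruct x, b; reflexivity.
    + intros f Hf [i j]; destruct x, b; cbn; try (destruct (f (i,j)); reflexivity);
      reflexivity.
  - simpl in H. split.
    + destruct H as [H|[H|[H|[H|[]]]]]; subst; reflexivity.
    + intros f Hf [i j].
      destruct H as [H|[H|[H|[H|[]]]]]; subst; cbn.
      * destruct (f (i,j)); reflexivity.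
      * unfold padd; cbn [fst snd]. fixpt f i j. destruct (f (i,j)), (f (i, j-1)); reflexivity.
      * reflexivity.
      * unfold padd; cbn [fst snd]. fixpt f i j. rewrite Hf. destruct (f (i,j)), (f (i, j-1)); reflexivity.
Qed.
Fixpoint up (c : Z -> bool) (n : nat) : bool :=
  match n with O => true | S m => xorb (up c m) (c (Z.of_nat (S m))) end.
Fixpoint down (c : Z -> bool) (n : nat) : bool :=
  match n with O => xorb true (c 0) | S m => xorb (down c m) (c (- Z.of_nat (S m))) end.
Fixpoint col (k : nat) : Z -> bool :=
  match k with
  | O => fun _ => true
  | S k' => fun m => if Z.leb 0 m then up (col k') (Z.to_nat m) else down (col k') (Z.to_nat (-m-1))
  end.

Lemma col_rec k m : col (S k) m = xorb (col (S k) (m-1)) (col k m).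
Proof.
  cbn [col]. set (c := col k).
  destruct (Z.leb_spec 0 m); destruct (Z.leb_spec 0 (m-1)).
  - replace (Z.to_nat m) with (S (Z.to_nat (m-1))) by lia. simpl.
    f_equal. f_equal. lia.
  - assert (m = 0) by lia. subst. simpl. destruct (c 0); reflexivity.
  - lia.
  - replace (Z.to_nat (- (m-1) - 1)) with (S (Z.to_nat (-m-1))) by lia. cbn [down].
    replace (- Z.of_nat (S (Z.to_nat (- m - 1)))) with m by lia.
    rewrite xorb_assoc, xorb_nilpotent, xorb_false_r. reflexivity.
Qed.

Lemma col_rec' k m : col (S k) (m-1) = xorb (col (S k) m) (col k m).
Proof. rewrite (col_rec k m). rewrite xorb_assoc, xorb_nilpotent, xorb_false_r; reflexivity. Qed.

Section F.
Variable n : Z.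
Definition fA (p : Z*Z) : bool := if Z.leb n (fst p) then col (Z.to_nat (fst p - n)) (snd p) else false.
Definition fB (p : Z*Z) : bool := if Z.leb n (snd p) then col (Z.to_nat (snd p - n)) (fst p) else false.
Definition fC (p : Z*Z) : bool := if Z.leb (fst p + snd p) (-n) then col (Z.to_nat (-n - (fst p + snd p))) (fst p) else false.

Lemma fA_FF : FF fA.
Proof.
  intros i j; unfold fA; cbn [fst snd].
  destruct (Z.leb_spec n (i-1)), (Z.leb_spec n i); try lia.
  - replace (Z.to_nat (i-n)) with (S (Z.to_nat (i-1-n))) by lia.
    rewrite (col_rec _ j). rewrite <- xorb_assoc, xorb_nilpotent, xorb_false_l. reflexivity.
  - replace (Z.to_nat (i-n)) with O by lia. reflexivity.
  - reflexivity.
Qed.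

Lemma fB_FF : FF fB.
Proof.
  intros i j; unfold fB; cbn [fst snd].
  destruct (Z.leb_spec n (j-1)), (Z.leb_spec n j); try lia.
  - replace (Z.to_nat (j-n)) with (S (Z.to_nat (j-1-n))) by lia.
    rewrite col_rec'. rewrite xorb_comm. reflexivity.
  - replace (Z.to_nat (j-n)) with O by lia. reflexivity.
  - reflexivity.
Qed.

Lemma fC_FF : FF fC.
Proof.
  intros i j; unfold fC; cbn [fst snd].
  replace (i - 1 + j) with (i + j - 1) by lia.
  replace (i + (j - 1)) with (i + j - 1) by lia.
  destruct (Z.leb_spec (i+j-1) (-n)), (Z.leb_spec (i+j) (-n)); try lia.
  - replace (Z.to_nat (-n - (i+j-1))) with (S (Z.to_nat (-n-(i+j)))) by lia.
    apply col_rec'.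
  - replace (Z.to_nat (-n - (i+j-1))) with O by lia. reflexivity.
  - reflexivity.
Qed.

Lemma fA_supp p : fA p = true -> n <= fst p.
Proof. unfold fA; destruct (Z.leb_spec n (fst p)); auto; discriminate. Qed.
Lemma fB_supp p : fB p = true -> n <= snd p.
Proof. unfold fB; destruct (Z.leb_spec n (snd p)); auto; discriminate. Qed.
Lemma fC_supp p : fC p = true -> fst p + snd p <= -n.
Proof. unfold fC; destruct (Z.leb_spec (fst p + snd p) (-n)); auto; discriminate. Qed.
End F.

Lemma pw_pos l k : pos (pw [l] k) = (Z.of_nat k * fst (step l), Z.of_nat k * snd (step l)).
Proof.
  induction k; simpl. reflexivity.
  change (pos (l :: pw [l] k) = (Z.of_nat (S k) * fst (step l), Z.of_nat (S k) * snd (step l))).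
  cbn [pos]; rewrite IHk; unfold padd; cbn [fst snd]; f_equal; lia.
Qed.

Lemma pw_lam f l k : fst l <> ga -> forall p, lam f p (pw [l] k) = false.
Proof.
  intros Hl; induction k; intro p; simpl. reflexivity.
  change (lam f p (l :: pw [l] k) = false).
  destruct l as [[] b]; simpl in *; try congruence; apply IHk.
Qed.

Lemma g_pos k : pos (g_ k) = (0,0).
Proof.
  unfold g_, ws, wsi, wt, wti, wa. rewrite !pos_app, !pw_pos. unfold padd; cbn. f_equal; lia.
Qed.

Lemma g_lam f k : lam f (0,0) (g_ k) =
  xorb (f (Z.of_nat k, 0)) (xorb (f (0, Z.of_nat k)) (f (0, - Z.of_nat k))).
Proof.
  unfold g_, ws, wsi, wt, wti, wa. rewrite !lam_app, ?pos_app, !pw_pos, !pw_lam by (simpl; congruence).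
  unfold padd; cbn. rewrite !xorb_false_r. f_equal; [|f_equal]; apply fpt; lia.
Qed.
Definition piece (y : Agen * bool) : word :=
  if snd y then winv (Aval (fst y)) else Aval (fst y).

Lemma Aeval_cons y L : Aeval (y :: L) = piece y ++ Aeval L.
Proof. reflexivity. Qed.

Definition dist (p q : Z*Z) : Z := Z.abs (fst q - fst p) + Z.abs (snd q - snd p).

Lemma piece_step y : Z.abs (fst (pos (piece y))) + Z.abs (snd (pos (piece y))) <= 1.
Proof. destruct y as [[] []]; cbn; lia. Qed.

Lemma piece_lam f y p : lam f p (piece y) = true -> f p = true \/ f (padd p (pos (piece y))) = true.
Proof.
  destruct y as [[] []]; cbn; destruct p as [i j]; unfold padd; cbn [fst snd];
  rewrite ?Z.add_0_r;
  intro H; repeat match type of H with context [f ?q] => destruct (f q) eqn:?; cbn in H end;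
  try discriminate; auto.
Qed.
Fixpoint qf (L : Aword) (p : Z*Z) (k : nat) : Z*Z :=
  match k, L with
  | O, _ => p
  | S k', y :: L' => qf L' (padd p (pos (piece y))) k'
  | S _, [] => p
  end.

Lemma qf_end L : forall p, qf L p (length L) = padd p (pos (Aeval L)).
Proof.
  induction L as [|y L IH]; intro p; cbn [length qf].
  - cbn. now rewrite padd_0r.
  - rewrite IH, Aeval_cons, pos_app, padd_assoc. reflexivity.
Qed.

Lemma qf_lam f L : forall p, lam f p (Aeval L) = true ->
  exists k, (k <= length L)%nat /\ f (qf L p k) = true.
Proof.
  induction L as [|y L IH]; intros p H.
  - cbn in H; discriminate.
  - rewrite Aeval_cons, lam_app in H.
    destruct (lam f p (piece y)) eqn:E.
    + apply piece_lam in E. destruct E as [E|E].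
      * exists O; split; [lia|exact E].
      * exists 1%nat; split; [cbn; lia| ]. cbn. destruct L; exact E.
    + destruct (IH _ H) as [k [Hk Hf]]. exists (S k); split; [cbn; lia|exact Hf].
Qed.

Lemma qf_step L : forall p k, (k < length L)%nat -> dist (qf L p k) (qf L p (S k)) <= 1.
Proof.
  induction L as [|y L IH]; intros p k Hk; cbn in Hk; [lia|].
  destruct k.
  - cbn [qf]. destruct L; cbn [qf]; unfold dist, padd; cbn [fst snd];
    pose proof (piece_step y); 
    replace (fst p + fst (pos (piece y)) - fst p) with (fst (pos (piece y))) by lia;
    replace (snd p + snd (pos (piece y)) - snd p) with (snd (pos (piece y))) by lia; lia.
  - cbn [qf]. apply IH. lia.
Qed.

Lemma qf_dist L p : forall d k, (k + d <= length L)%nat ->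
  dist (qf L p k) (qf L p (k + d)) <= Z.of_nat d.
Proof.
  induction d; intros k Hk.
  - rewrite Nat.add_0_r; unfold dist; lia.
  - pose proof (IH := IHd k ltac:(lia)).
    pose proof (S1 := qf_step L p (k + d) ltac:(lia)).
    replace (k + S d)%nat with (S (k + d)) by lia.
    unfold dist in *. lia.
Qed.

Lemma qf_dist2 L p k l : (k <= length L)%nat -> (l <= length L)%nat ->
  dist (qf L p k) (qf L p l) <= Z.abs (Z.of_nat l - Z.of_nat k).
Proof.
  intros Hk Hl. destruct (Nat.le_ge_cases k l).
  - pose proof (qf_dist L p (l - k) k ltac:(lia)).
    replace (k + (l - k))%nat with l in H0 by lia. lia.
  - pose proof (qf_dist L p (k - l) l ltac:(lia)).
    replace (l + (k - l))%nat with k in H0 by lia. unfold dist in *. lia.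
Qed.

Lemma lin L p k l : (k <= l)%nat -> (l <= length L)%nat ->
  let a := fst (qf L p k) in let b := snd (qf L p k) in
  let c := fst (qf L p l) in let d := snd (qf L p l) in
  (c - a) + (d - b) <= Z.of_nat l - Z.of_nat k /\
  (c - a) - (d - b) <= Z.of_nat l - Z.of_nat k /\
  - (c - a) + (d - b) <= Z.of_nat l - Z.of_nat k /\
  - (c - a) - (d - b) <= Z.of_nat l - Z.of_nat k.
Proof.
  intros Hkl Hl. pose proof (qf_dist L p (l - k) k ltac:(lia)) as D.
  replace (k + (l - k))%nat with l in D by lia.
  unfold dist in D. rewrite Nat2Z.inj_sub in D by lia.
  cbv zeta. lia.
Qed.

Ltac seg L k l := let H := fresh "S" in
  pose proof (lin L (0,0) k l ltac:(lia) ltac:(lia)) as H; cbv zeta in H.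

Theorem mainTheorem6 : forall n : nat, (1 <= n)%nat -> dA_one_ge (g_ n) (6 * n).
Proof.
  intros n Hn L HL.
  destruct (weq_inv _ _ HL) as [Hpos Hlam].
  rewrite g_pos in Hpos.
  set (z := Z.of_nat n).
  assert (HA : lam (fA z) (0,0) (Aeval L) = true).
  { rewrite (Hlam _ (fA_FF z)), g_lam. fold z. unfold fA; cbn [fst snd].
    destruct (Z.leb_spec z z); [|lia]. destruct (Z.leb_spec z 0); [lia|].
    rewrite Z.sub_diag. reflexivity. }
  assert (HB : lam (fB z) (0,0) (Aeval L) = true).
  { rewrite (Hlam _ (fB_FF z)), g_lam. fold z. unfold fB; cbn [fst snd].
    destruct (Z.leb_spec z z); [|lia]. destruct (Z.leb_spec z 0); [lia|].
    destruct (Z.leb_spec z (-z)); [lia|].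
    rewrite Z.sub_diag. reflexivity. }
  assert (HC : lam (fC z) (0,0) (Aeval L) = true).
  { rewrite (Hlam _ (fC_FF z)), g_lam. fold z. unfold fC; cbn [fst snd].
    destruct (Z.leb_spec (z + 0) (-z)); [lia|]. destruct (Z.leb_spec (0 + z) (-z)); [lia|].
    destruct (Z.leb_spec (0 + - z) (-z)); [|lia].
    replace (- z - (0 + - z)) with 0 by lia. reflexivity. }
  destruct (qf_lam _ _ _ HA) as [ka [Hka Fa]].
  destruct (qf_lam _ _ _ HB) as [kb [Hkb Fb]].
  destruct (qf_lam _ _ _ HC) as [kc [Hkc Fc]].
  apply fA_supp in Fa. apply fB_supp in Fb. apply fC_supp in Fc.
  pose proof (qf_end L (0,0)) as Hend. rewrite Hpos in Hend. rewrite padd_0l in Hend.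
  assert (H0 : qf L (0,0) 0 = (0,0)) by (destruct L; reflexivity).
  unfold dA_one_ge.
  destruct (Nat.le_ge_cases ka kb), (Nat.le_ge_cases kb kc), (Nat.le_ge_cases ka kc);
  [ seg L 0%nat ka; seg L ka kb; seg L kb kc; seg L kc (length L)
  | seg L 0%nat ka; seg L ka kb; seg L kb kc; seg L kc (length L)
  | seg L 0%nat ka; seg L ka kc; seg L kc kb; seg L kb (length L)
  | seg L 0%nat kc; seg L kc ka; seg L ka kb; seg L kb (length L)
  | seg L 0%nat kb; seg L kb ka; seg L ka kc; seg L kc (length L)
  | seg L 0%nat kb; seg L kb kc; seg L kc ka; seg L ka (length L)
  | seg L 0%nat kb; seg L kb kc; seg L kc ka; seg L ka (length L)
  | seg L 0%nat kc; seg L kc kb; seg L kb ka; seg L ka (length L) ];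
  rewrite ?H0, ?Hend in *;
  destruct (qf L (0,0) ka) as [xa ya], (qf L (0,0) kb) as [xb yb], (qf L (0,0) kc) as [xc yc];
  cbn [fst snd] in *; subst z; lia.
Qed.
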